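(* Let $q\geq 2$ be an integer, $z\geq 2$, $\beta>0$, and let $\bar\nu\in\mathcal{P}(\{1,\dots,q\})$ be a global minimizer of $\Gamma_{\beta,q,z}(\nu)=-\frac{\beta}{z}\sum_{i=1}^q\nu_i^z+\sum_{i=1}^q\nu_i\log(q\nu_i)$ whose coordinates are ordered, $\bar\nu_1\geq\bar\nu_2\geq\dots\geq\bar\nu_q$. Define $g(x):=\beta x^{z-1}-\log(qx)$ for $x\in(0,1]$ and let $\tilde u:=(\beta(z-1))^{-1/(z-1)}$ be the minimizer of $g$. Then: (i) If $\bar\nu_1\leq\tilde u$, then $\bar\nu_k=\bar\nu_1$ for all $k\in\{2,\dots,q\}$, so $\bar\nu=(\frac1q,\dots,\frac1q)^T$. (ii) If $\bar\nu_1>\tilde u$, then $\bar\nu_k\in\{\bar\nu_0,\bar\nu_1\}$ for all $k\in\{2,\dots,q\}$, where $\bar\nu_0<\bar\nu_1$ satisfies $g(\bar\nu_0)=g(\bar\nu_1)$; in this case $$\bar\nu=(\underbrace{\bar\nu_1,\dots,\bar\nu_1}_{l\text{ times}},\bar\nu_0,\dots,\bar\nu_0)^T\quad\text{with }\bar\nu_1=\frac{1-(q-l)\bar\nu_0}{l},$$ for some $1\leq l\leq q$.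
   Context: $\mathcal{P}(\{1,\dots,q\})$ denotes the set of probability vectors on $\{1,\dots,q\}$. *)

(* Defs.v *)
From HB Require Import structures.
From mathcomp Require Import all_boot all_order all_algebra.
From mathcomp Require Import all_classical all_reals all_analysis.
Set Implicit Arguments. Unset Strict Implicit. Unset Printing Implicit Defensive.
Import Order.TTheory GRing.Theory Num.Theory.
Local Open Scope ring_scope.

(* nu : 'I_q -> R ; paper index i in {1..q} corresponds to ordinal i-1 *)
Definition is_prob (R : realType) (q : nat) (nu : 'I_q -> R) : Prop :=
  (forall i, 0 <= nu i) /\ \sum_(i < q) nu i = 1.

(* x log(q x), with the standard convention 0 log 0 = 0 *)
Definition xlogqx (R : realType) (q : nat) (x : R) : R :=
  if x == 0 then 0 else x * ln (q%:R * x).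

Definition Gamma (R : realType) (beta : R) (q : nat) (z : R) (nu : 'I_q -> R) : R :=
  - (beta / z) * \sum_(i < q) (nu i `^ z) + \sum_(i < q) xlogqx q (nu i).

Definition is_global_minimizer (R : realType) (beta : R) (q : nat) (z : R)
  (nu : 'I_q -> R) : Prop :=
  is_prob nu /\ forall mu : 'I_q -> R, is_prob mu -> Gamma beta z nu <= Gamma beta z mu.

Definition nonincreasing_coords (R : realType) (q : nat) (nu : 'I_q -> R) : Prop :=
  forall i j : 'I_q, (i <= j)%N -> nu j <= nu i.

Definition gfun (R : realType) (beta : R) (q : nat) (z : R) (x : R) : R :=
  beta * x `^ (z - 1) - ln (q%:R * x).

Definition u_tilde (R : realType) (beta z : R) : R :=
  (beta * (z - 1)) `^ (- (z - 1)^-1).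

(* Main.v *)
Require Import Defs.
From HB Require Import structures.
From mathcomp Require Import all_boot all_order all_algebra.
From mathcomp Require Import all_classical all_reals all_analysis.
From mathcomp Require Import lra.
Import Order.TTheory GRing.Theory Num.Theory.
Import numFieldNormedType.Exports.
Local Open Scope classical_set_scope.
Local Open Scope ring_scope.

Section S.
Variable R : realType.
Variables (q : nat) (z beta : R).
Hypothesis hq : (2 <= q)%N.
Hypothesis hz : 2 <= z.
Hypothesis hbeta : 0 < beta.

Definition psi (x : R) : R := - (beta / z) * x `^ z + x * (ln q%:R + ln x).

Lemma q_gt0 : 0 < q%:R :> R.
Proof. by rewrite ltr0n; apply: leq_trans hq. Qed.

Lemma z_gt0 : 0 < z. Proof. exact: lt_le_trans hz. Qed.

Lemma gfunE (x : R) : 0 < x -> gfun beta q z x = beta * x `^ (z - 1) - (ln q%:R + ln x).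
Proof. by move=> x0; rewrite /gfun lnM ?posrE ?q_gt0. Qed.

Lemma psi_deriv {x : R} : 0 < x -> is_derive x 1 psi (1 - gfun beta q z x).
Proof.
move=> x0.
have h1 := is_deriveZ (- (beta/z)) (is_derive1_powR z x0).
have h2 : is_derive x (1:R) (fun y : R => y * (ln q%:R + ln y)) (ln q%:R + ln x + 1).
  apply: is_derive_eq.
    apply: (@is_deriveM _ _ (fun y : R => y) (fun y => ln q%:R + ln y)).
    apply: is_deriveD; exact: is_derive1_ln.
  rewrite /= add0r; change (x * x^-1 + (ln q%:R + ln x) * 1 = ln q%:R + ln x + 1).
  by rewrite mulr1 mulfV ?gt_eqF// addrC.
have h3 := is_deriveD h1 h2.
have -> : psi = (- (beta / z) \*: (powR (R:=R))^~ z) + (fun y : R => y * (ln q%:R + ln y)).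
  by apply/funext => y.
apply: (is_derive_eq h3).
rewrite gfunE // /GRing.scale /=.
have zn0 : z != 0 by rewrite gt_eqF // z_gt0.
rewrite mulrA mulNr divfK //.
lra.
Qed.

Lemma g_deriv {x : R} : 0 < x -> is_derive x 1 (gfun beta q z) (beta * ((z - 1) * x `^ (z - 1 - 1)) - x^-1).
Proof.
move=> x0.
have h1 := is_deriveZ beta (is_derive1_powR (z - 1) x0).
have h2 : is_derive x (1:R) (fun y : R => ln (q%:R * y)) ((q%:R * x)^-1 * q%:R).
  have := @is_derive1_comp R (@ln R) (fun y => q%:R * y) x ((q%:R * x)^-1) q%:R.
  move=> H; apply: H.
    by apply: is_derive1_ln; rewrite mulr_gt0 // q_gt0.
  have hh := is_deriveZ q%:R (@is_derive_id _ R x 1).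
  change (is_derive x 1 (q%:R \*: (@id R)) q%:R).
  apply: (is_derive_eq hh).
  by change (q%:R * 1 = q%:R :> R); rewrite mulr1.
have h3 := is_deriveB h1 h2.
have -> : gfun beta q z = (beta \*: (powR (R:=R))^~ (z - 1)) - (fun y : R => ln (q%:R * y)).
  by apply/funext => y.
apply: (is_derive_eq h3).
change (beta * ((z - 1) * x `^ (z - 1 - 1)) - (q%:R * x)^-1 * q%:R = beta * ((z - 1) * x `^ (z - 1 - 1)) - x^-1).
by rewrite invfM mulrAC mulVf ?gt_eqF ?q_gt0 // mul1r.
Qed.


Definition dg (c : R) := beta * ((z - 1) * c `^ (z - 1 - 1)) - c^-1.
Let ut := u_tilde beta z.

Lemma z1_gt0 : 0 < z - 1. Proof. have := hz; lra. Qed.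

Lemma bz_gt0 : 0 < beta * (z - 1). Proof. by rewrite mulr_gt0 // z1_gt0. Qed.

Lemma ut_gt0 : 0 < ut. Proof. by rewrite /ut /u_tilde powR_gt0 // bz_gt0. Qed.

Lemma ut_pow : ut `^ (z - 1) = (beta * (z - 1))^-1.
Proof.
rewrite /ut /u_tilde -powRrM mulNr mulVf ?gt_eqF ?z1_gt0 //.
by rewrite powR_inv1 // ltW // bz_gt0.
Qed.

Lemma c_dg (c : R) : 0 < c -> c * dg c = beta * (z - 1) * c `^ (z - 1) - 1.
Proof.
move=> c0; rewrite /dg mulrBr mulfV ?gt_eqF //.
congr (_ - _).
rewrite [c * _]mulrC -!mulrA [c `^ _ * c]mulrC mulr_powRB1 ?ltW ?z1_gt0 //.
Qed.

Lemma dg_neg (c : R) : 0 < c -> c < ut -> dg c < 0.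
Proof.
move=> c0 cu.
have : c * dg c < 0.
  rewrite c_dg // subr_lt0.
  have h : c `^ (z - 1) < ut `^ (z - 1).
    by rewrite gt0_ltr_powR ?z1_gt0 // ?nnegrE ?ltW ?ut_gt0.
  rewrite ut_pow in h.
  have := ltr_pM2l bz_gt0 (c `^ (z - 1)) ((beta * (z - 1))^-1).
  rewrite h mulfV ?gt_eqF ?bz_gt0 // => /esym H.
by rewrite pmulr_rlt0.
Qed.

Lemma dg_pos (c : R) : ut < c -> 0 < dg c.
Proof.
move=> cu; have c0 : 0 < c := lt_trans ut_gt0 cu.
have : 0 < c * dg c.
  rewrite c_dg // subr_gt0.
  have h : ut `^ (z - 1) < c `^ (z - 1).
    by rewrite gt0_ltr_powR ?z1_gt0 // ?nnegrE ?ltW ?ut_gt0.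
  rewrite ut_pow in h.
  have := ltr_pM2l bz_gt0 ((beta * (z - 1))^-1) (c `^ (z - 1)).
  rewrite h mulfV ?gt_eqF ?bz_gt0 // => /esym H.
by rewrite pmulr_rgt0.
Qed.

Lemma g_cont (a b : R) : 0 < a -> {within `[a, b], continuous (gfun beta q z)}.
Proof.
move=> a0; apply: continuous_in_subspaceT => x.
rewrite inE /= in_itv /= => /andP [ax _].
apply: differentiable_continuous; apply/derivable1_diffP.
by case: (g_deriv (lt_le_trans a0 ax)).
Qed.

Lemma psi_cont (a b : R) : 0 < a -> {within `[a, b], continuous psi}.
Proof.
move=> a0; apply: continuous_in_subspaceT => x.
rewrite inE /= in_itv /= => /andP [ax _].
apply: differentiable_continuous; apply/derivable1_diffP.
by case: (psi_deriv (lt_le_trans a0 ax)).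
Qed.

Lemma g_MVT {x y : R} : 0 < x -> x < y ->
  exists2 c, x < c < y & gfun beta q z y - gfun beta q z x = dg c * (y - x).
Proof.
move=> x0 xy.
have hd : forall c, c \in `]x, y[ -> is_derive c 1 (gfun beta q z) (dg c).
  move=> c; rewrite in_itv /= => /andP [xc _].
  exact: g_deriv (lt_trans x0 xc).
have [c cin ->] := @MVT R (gfun beta q z) dg x y xy hd (@g_cont x y x0).
by exists c => //; move: cin; rewrite in_itv.
Qed.

Lemma g_dec {x y : R} : 0 < x -> x < y -> y <= ut -> gfun beta q z y < gfun beta q z x.
Proof.
move=> x0 xy yu; have [c /andP [xc cy] e] := g_MVT x0 xy.
rewrite -subr_lt0 e pmulr_llt0 ?subr_gt0 //.
by apply: dg_neg; [exact: lt_trans xc | exact: lt_le_trans yu].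
Qed.

Lemma g_inc {x y : R} : ut <= x -> x < y -> gfun beta q z x < gfun beta q z y.
Proof.
move=> ux xy; have x0 : 0 < x := lt_le_trans ut_gt0 ux.
have [c /andP [xc cy] e] := g_MVT x0 xy.
rewrite -subr_gt0 e pmulr_lgt0 ?subr_gt0 //.
by rewrite -subr_gt0; apply: dg_pos; exact: le_lt_trans xc.
Qed.


Lemma nu0_ex {y : R} : ut < y ->
  exists c, [/\ 0 < c, c <= ut & gfun beta q z c = gfun beta q z y].
Proof.
move=> uy.
set M := `|gfun beta q z y|.
set a := Num.min ut (expR (- M) / q%:R).
have e0 : 0 < expR (- M) / q%:R by rewrite divr_gt0 ?expR_gt0 ?q_gt0.
have a0 : 0 < a by rewrite lt_min ut_gt0 e0.
have au : a <= ut by rewrite ge_min lexx.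
have ga : gfun beta q z y <= gfun beta q z a.
  have h1 : ln (q%:R * a) <= - M.
    rewrite -[X in _ <= X]expRK ler_ln ?posrE ?mulr_gt0 ?q_gt0 ?expR_gt0 //.
    rewrite -ler_pdivlMl ?q_gt0 // mulrC.
    by rewrite ge_min lexx orbT.
  have h2 : 0 <= beta * a `^ (z - 1) by apply: mulr_ge0; [exact: ltW | exact: powR_ge0].
  have h3 : gfun beta q z y <= M by rewrite ler_norm.
  rewrite [gfun _ _ _ a]/gfun; lra.
have gu : gfun beta q z ut < gfun beta q z y by apply: g_inc.
have [c cin gc] := @IVT R (gfun beta q z) a ut (gfun beta q z y) au (@g_cont a ut a0)
  (ltac:(by rewrite ge_min le_max (ltW gu) ga orbT)).
move: cin; rewrite in_itv /= => /andP [ac cu].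
by exists c; split => //; exact: lt_le_trans ac.
Qed.


Definition phi (x : R) : R := - (beta / z) * x `^ z + xlogqx q x.

Lemma phi_psi {x : R} : 0 < x -> phi x = psi x.
Proof.
move=> x0; rewrite /phi /psi /xlogqx gt_eqF // lnM ?posrE ?q_gt0 //.
Qed.

Lemma phi0 : phi 0 = 0.
Proof. by rewrite /phi /xlogqx eqxx powR0 ?gt_eqF ?z_gt0 // mulr0 addr0. Qed.

Lemma GammaE (nu : 'I_q -> R) : Gamma beta z nu = \sum_(k < q) phi (nu k).
Proof. by rewrite /Gamma mulr_sumr -big_split. Qed.

Lemma sum2 (F : 'I_q -> R) (i j : 'I_q) : i != j ->
  \sum_k F k = F i + F j + \sum_(k | (k != i) && (k != j)) F k.
Proof.
move=> ij; rewrite (bigD1 i) //= (bigD1 j) /=; last by rewrite eq_sym.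
by rewrite addrA.
Qed.

Lemma min_pair (nu : 'I_q -> R) (i j : 'I_q) (s : R) :
  is_global_minimizer beta z nu -> i != j -> - nu i <= s -> s <= nu j ->
  phi (nu i) + phi (nu j) <= phi (nu i + s) + phi (nu j - s).
Proof.
move=> [[nu0 nu1] Hmin] ij h1 h2.
pose mu := fun k : 'I_q => if k == i then nu i + s else if k == j then nu j - s else nu k.
have mui : mu i = nu i + s by rewrite /mu eqxx.
have muj : mu j = nu j - s by rewrite /mu eq_sym (negbTE ij) eqxx.
have mur : forall k, (k != i) && (k != j) -> mu k = nu k.
  by move=> k /andP [ki kj]; rewrite /mu (negbTE ki) (negbTE kj).
have pmu : is_prob mu.
  split.
    move=> k; rewrite /mu; case: ifP => _; first by rewrite -(subrr (nu i)) lerD2l.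
    by case: ifP => _ //; rewrite subr_ge0.
  rewrite (sum2 _ _ _ ij) mui muj (eq_bigr _ mur) -nu1 (sum2 _ _ _ ij).
  congr (_ + _); rewrite addrACA subrr addr0 //.
have := Hmin mu pmu.
rewrite !GammaE (sum2 _ _ _ ij) [X in _ <= X](sum2 _ _ _ ij) mui muj.
rewrite [X in _ <= _ + X](eq_bigr (fun k => phi (nu k))); last by move=> k km; congr phi; exact: mur.
by rewrite lerD2r.
Qed.


Lemma lagrange {nu : 'I_q -> R} {i j : 'I_q} :
  is_global_minimizer beta z nu -> i != j -> 0 < nu i -> 0 < nu j ->
  gfun beta q z (nu i) = gfun beta q z (nu j).
Proof.
move=> Hm ij a0 b0.
set a := nu i in a0 *; set b := nu j in b0 *.
pose h : R -> R := fun t => psi (a + t) + psi (b - t).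
have hd : forall t, 0 < a + t -> 0 < b - t -> is_derive t 1 h
    ((1 - gfun beta q z (a + t)) * 1 + (1 - gfun beta q z (b - t)) * (-1)).
  move=> t h1 h2.
  have d1 : is_derive t 1 (fun s : R => a + s) 1.
    have hh := is_deriveD (is_derive_cst a t 1) (is_derive_id t (1:R)).
    change (is_derive t 1 (cst a + id) 1); apply: (is_derive_eq hh).
    by rewrite add0r.
  have d2 : is_derive t 1 (fun s : R => b - s) (-1).
    have hh := is_deriveB (is_derive_cst b t 1) (is_derive_id t (1:R)).
    change (is_derive t 1 (cst b - id) (-1)); apply: (is_derive_eq hh).
    by rewrite sub0r.
  have e1 := @is_derive1_comp R psi (fun s => a + s) t _ _ (psi_deriv h1) d1.
  have e2 := @is_derive1_comp R psi (fun s => b - s) t _ _ (psi_deriv h2) d2.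
  have e3 := is_deriveD e1 e2.
  exact: e3.
have mn : forall t, t \in `]- a, b[ -> h 0 <= h t.
  move=> t; rewrite in_itv /= => /andP [t1 t2].
  rewrite /h /= addr0 subr0 -!phi_psi //; last 2 first.
  - by rewrite subr_gt0.
  - by rewrite -(subrr (- t)) opprK ltrD2r -ltrNl.
  by apply: min_pair => //; rewrite ltW.
have ab : - a <= b by have := a0; have := b0; lra.
have dv : forall t, t \in `]- a, b[ -> derivable h t 1.
  move=> t; rewrite in_itv /= => /andP [t1 t2].
  have [] := hd t _ _; [ by rewrite -(subrr (- t)) opprK ltrD2r -ltrNl
                     | by rewrite subr_gt0 | by [] ].
have c0 : (0:R) \in `]- a, b[ by rewrite in_itv /= oppr_lt0 a0 b0.
have H0 := derive1_at_min ab dv c0 mn.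
have E1 : 'D_1 h 0 = 0 by case: H0.
have H1 := hd 0 (ltac:(by rewrite addr0)) (ltac:(by rewrite subr0)).
have E2 := @derive_val _ _ _ _ _ _ _ H1.
move: E2; rewrite E1 addr0 subr0 => /eqP; rewrite mulr1 mulrN1 eq_sym subr_eq0 => /eqP.
lra.
Qed.


Lemma pos_coords {nu : 'I_q -> R} :
  is_global_minimizer beta z nu -> forall j, 0 < nu j.
Proof.
move=> Hm j; have [[nn s1] _] := Hm.
rewrite lt_def nn andbT; apply/negP => /eqP nj0.
have [i ai] : exists i, 0 < nu i.
  case/boolP: [exists i, 0 < nu i] => [/existsP //|/existsPn H].
  have : \sum_(k < q) nu k <= 0 by apply: sumr_le0 => k _; rewrite leNgt H.
  by rewrite s1 ler10.
have ij : j != i by apply/eqP => E; move: ai; rewrite -E nj0 ltxx.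
set a := nu i in ai *.
have a1 : a <= 1.
  by rewrite -s1 (bigD1 i) //= lerDl sumr_ge0.
set t := a / 2 * expR (- beta).
have ex1 : expR (- beta) <= 1 by rewrite expR_le1 oppr_le0 ltW.
have t0 : 0 < t by rewrite mulr_gt0 ?divr_gt0 ?expR_gt0.
have ta : t <= a / 2.
  by rewrite /t -[X in _ <= X]mulr1 ler_wpM2l // ltW // divr_gt0.
have at0 : 0 < a - t by have := ai; lra.
have Hp := @min_pair nu j i t Hm ij (ltac:(rewrite nj0 oppr0; exact: ltW)) (ltac:(by change (t <= a); have := ai; lra)).
rewrite nj0 add0r phi0 add0r in Hp.
have hd : forall x, x \in `]a - t, a[ -> is_derive x 1 psi (1 - gfun beta q z x).
  move=> x; rewrite in_itv /= => /andP [x1 _].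
  exact: psi_deriv (lt_trans at0 x1).
have [c cin Ec] := @MVT R psi (fun x => 1 - gfun beta q z x) (a - t) a
  (ltac:(by have := t0; lra)) hd (@psi_cont (a - t) a at0).
move: cin; rewrite in_itv /= => /andP [c1 c2].
have c0 : 0 < c := lt_trans at0 c1.
rewrite -/a (phi_psi ai) (phi_psi at0) (phi_psi t0) in Hp.
rewrite (_ : a - (a - t) = t) in Ec; last by lra.
have pt : psi t <= t * (ln q%:R + ln t).
  rewrite /psi gerDr mulNr oppr_le0; apply: mulr_ge0; last exact: powR_ge0.
  by rewrite divr_ge0 // ltW // z_gt0.
have H1 : (1 - gfun beta q z c) * t <= (ln q%:R + ln t) * t.
  by rewrite -Ec mulrC; lra.
rewrite ler_pM2r // gfunE // in H1.
have H2 : beta * c `^ (z - 1) <= beta.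
  apply: (@le_trans _ _ (beta * 1)); last by rewrite mulr1.
  apply: ler_wpM2l; first exact: ltW.
  have hc1 : c <= 1 := le_trans (ltW c2) a1.
  have := @ge0_ler_powR R (z - 1) (ltW z1_gt0) c 1 (ltac:(by rewrite nnegrE ltW)) (ltac:(by rewrite nnegrE)) hc1.
  by rewrite powR1.
have H3 : ln (a / 2) <= ln c.
  rewrite ler_ln ?posrE ?divr_gt0 //; have := ta; lra.
have H4 : ln t = ln (a / 2) - beta.
  by rewrite /t lnM ?posrE ?divr_gt0 ?expR_gt0 // expRK.
lra.
Qed.

Lemma main_sec (nu : 'I_q -> R) :
  is_global_minimizer beta z nu ->
  nonincreasing_coords nu ->
  let nu1 := nu (Ordinal (ltnW hq)) in
  (nu1 <= u_tilde beta z ->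
     forall k : 'I_q, nu k = nu1 /\ nu k = (q%:R)^-1) /\
  (u_tilde beta z < nu1 ->
     exists nu0 : R,
       [/\ 0 < nu0, nu0 < nu1, gfun beta q z nu0 = gfun beta q z nu1,
           (forall k : 'I_q, nu k = nu0 \/ nu k = nu1) &
           exists l : nat,
             [/\ (1 <= l <= q)%N,
                 (forall k : 'I_q, (k < l)%N -> nu k = nu1),
                 (forall k : 'I_q, (l <= k)%N -> nu k = nu0) &
                 nu1 = (1 - (q - l)%:R * nu0) / l%:R]]).
Proof.
move=> Hm Hdec nu1.
have pos := pos_coords Hm.
set i0 := Ordinal (ltnW hq) in nu1 *.
have le1 : forall k, nu k <= nu1 by move=> k; apply: Hdec; exact: leq0n.
have geq : forall k, gfun beta q z (nu k) = gfun beta q z nu1.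
  move=> k; case: (eqVneq k i0) => [-> //|ki].
  exact: lagrange Hm ki (pos k) (pos i0).
have s1 : \sum_(k < q) nu k = 1 by case: Hm => [[]].
split.
  move=> h1.
  have ek : forall k, nu k = nu1.
    move=> k; apply/eqP; rewrite eq_le le1 /= leNgt; apply/negP => lt.
    by have := g_dec (pos k) lt h1; rewrite geq ltxx.
  move=> k; split; first exact: ek.
  move: s1; rewrite (eq_bigr (fun=> nu1)); last by move=> j _; exact: ek.
  rewrite sumr_const card_ord -mulr_natr => E.
  have qn0 : q%:R != 0 :> R by rewrite gt_eqF // q_gt0.
  by rewrite ek; apply: (mulIf qn0); rewrite ?mul1r mulVf // mulr_natr.
move=> h1.
have [c [c0 cu gc]] := nu0_ex h1.
have cnu : c < nu1 := le_lt_trans cu h1.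
have vals : forall k, nu k = c \/ nu k = nu1.
  move=> k; case: (leP (u_tilde beta z) (nu k)) => H.
    right; apply/eqP; rewrite eq_le le1 /= leNgt; apply/negP => lt.
    by have := g_inc H lt; rewrite geq ltxx.
  left; case: (ltgtP (nu k) c) => // lt.
    by have := g_dec (pos k) lt cu; rewrite gc geq ltxx.
  by have := g_dec c0 lt (ltW H); rewrite gc geq ltxx.
exists c; split => //.
pose P n := (q <= n)%N || [exists k : 'I_q, (val k == n) && (nu k != nu1)].
have Pex : exists n, P n by exists q; rewrite /P leqnn.
case: (ex_minnP Pex) => l Pl lmin.
have lq : (l <= q)%N by apply: lmin; rewrite /P leqnn.
have lt_l : forall k : 'I_q, (k < l)%N -> nu k = nu1.
  move=> k kl; apply/eqP; apply/negP => /negP nk.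
  have : (l <= k)%N by apply: lmin; apply/orP; right; apply/existsP; exists k; rewrite eqxx nk.
  by rewrite leqNgt kl.
have l1 : (1 <= l)%N.
  rewrite lt0n; apply/negP => /eqP l0; move: Pl; rewrite /P l0 leqn0.
  have -> : (q == 0%N) = false by apply/negbTE; rewrite -lt0n (ltnW hq).
  move=> /existsP [k /andP [/eqP k0 nk]].
  have kE : k = i0 by apply: val_inj.
  by move: nk; rewrite kE eqxx.
have ge_l : forall k : 'I_q, (l <= k)%N -> nu k = c.
  move=> k lk; move: Pl; rewrite /P => /orP [ql|].
    by move: (ltn_ord k); rewrite ltnNge (leq_trans ql lk).
  move=> /existsP [k0 /andP [/eqP k0l nk0]].
  have ek0 : nu k0 = c by case: (vals k0) => // E; move: nk0; rewrite E eqxx.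
  have : nu k <= c by rewrite -ek0; apply: Hdec; rewrite k0l.
  case: (vals k) => // -> H; have := lt_le_trans cnu H; by rewrite ltxx.
exists l; split => //; first by rewrite l1 lq.
pose F := fun n : nat => if (n < l)%N then nu1 else c.
have E : \sum_(k < q) nu k = \sum_(0 <= n < q) F n.
  rewrite big_mkord; apply: eq_bigr => k _; rewrite /F.
  by case: ifP => kl; [exact: lt_l | apply: ge_l; rewrite leqNgt kl].
rewrite E (@big_cat_nat _ _ _ l) //= in s1.
rewrite (@eq_big_nat _ _ _ 0 l _ (fun=> nu1)) in s1; last first.
  by move=> n /andP [_ nl]; rewrite /F nl.
rewrite (@eq_big_nat _ _ _ l q _ (fun=> c)) in s1; last first.
  by move=> n /andP [ln _]; rewrite /F ltnNge ln.
rewrite !sumr_const_nat subn0 -[nu1 *+ l]mulr_natr -[c *+ (q - l)]mulr_natl in s1.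
have E' : 1 - (q - l)%:R * c = nu1 * l%:R by rewrite -[X in X - _ = _]s1 addrK.
by rewrite E' mulfK // pnatr_eq0 -lt0n.
Qed.

End S.

Theorem lemma5p3 (R : realType) (q : nat) (hq : (2 <= q)%N) (z beta : R)
  (hz : 2 <= z) (hbeta : 0 < beta) (nu : 'I_q -> R) :
  is_global_minimizer beta z nu ->
  nonincreasing_coords nu ->
  let nu1 := nu (Ordinal (ltnW hq)) in
  (nu1 <= u_tilde beta z ->
     forall k : 'I_q, nu k = nu1 /\ nu k = (q%:R)^-1) /\
  (u_tilde beta z < nu1 ->
     exists nu0 : R,
       [/\ 0 < nu0, nu0 < nu1, gfun beta q z nu0 = gfun beta q z nu1,
           (forall k : 'I_q, nu k = nu0 \/ nu k = nu1) &
           exists l : nat,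
             [/\ (1 <= l <= q)%N,
                 (forall k : 'I_q, (k < l)%N -> nu k = nu1),
                 (forall k : 'I_q, (l <= k)%N -> nu k = nu0) &
                 nu1 = (1 - (q - l)%:R * nu0) / l%:R]]).
Proof. exact: main_sec. Qed.
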